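(* Let $C\in\mathbb{R}^{n\times n}$ be symmetric, let $\alpha>0,\beta>0$ satisfy $\kappa:=\frac{(\alpha^2-4\alpha-2)\beta}{2\alpha^2}-\frac1\beta>0$, and let $\rho>0$ with $\rho\ge\max\{\alpha\|C\|_\infty,\beta\|C\|\}$. Let $(\tilde\sigma^k,\sigma^k,y^k)$ be generated by the ADMM-BM algorithm described in the context, with Assumption A holding. Then for all $k\ge2$ the sequence $L_\rho(\tilde\sigma^k,\sigma^k,y^k)$ is monotonically non-increasing and $$L_\rho(\tilde\sigma^k,\sigma^k,y^k)-L_\rho(\tilde\sigma^{k+1},\sigma^{k+1},y^{k+1})\ge\kappa\|C\|\,\|\tilde\sigma^{k+1}-\tilde\sigma^k\|_F^2+\frac\rho2\|\sigma^{k+1}-\sigma^k\|_F^2.$$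
   Context: $\langle A,B\rangle=\mathrm{Tr}(A^\top B)$, $\|\cdot\|_F$ Frobenius norm, $\|C\|$ spectral norm, $\|C\|_\infty=\max_i\sum_j|C_{ij}|$. For $\sigma\in\mathbb{R}^{n\times r}$, $\sigma_i$ is its $i$-th row; $\mathcal{M}=\{\sigma\in\mathbb{R}^{n\times r}:\|\sigma_i\|=1\ \forall i\}$. ADMM-BM with parameter $\rho$: choose $\tilde\sigma^0\in\mathcal{M}$, $\sigma^0=\tilde\sigma^0$, $y^0=C\tilde\sigma^0$. For $k=0,1,\dots$: $\gamma^k=\sigma^k-\frac1\rho(y^k+C\sigma^k)$ with rows $\gamma_i^k$; $\tilde\sigma^{k+1}_i=\gamma_i^k/\|\gamma_i^k\|$; $\sigma^{k+1}=\tilde\sigma^{k+1}+\frac1\rho(y^k-C\tilde\sigma^{k+1})$; $y^{k+1}=y^k+\rho(\tilde\sigma^{k+1}-\sigma^{k+1})$. Assumption A: $\gamma_i^k\neq0$ for all $i,k$. $L_\rho(\tilde\sigma,\sigma,y)=\langle C,\tilde\sigma\sigma^\top\rangle+\langle y,\tilde\sigma-\sigma\rangle+\frac\rho2\|\tilde\sigma-\sigma\|_F^2+\sum_i\mathcal{I}_{\{\|u\|=1\}}(\tilde\sigma_i)$, $\mathcal{I}_S$ the indicator function of $S$. *)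

(* Defs.v *)
From HB Require Import structures.
From mathcomp Require Import all_boot all_order all_algebra.
From mathcomp Require Import boolp classical_sets reals constructive_ereal.
Set Implicit Arguments. Unset Strict Implicit. Unset Printing Implicit Defensive.
Import Order.TTheory GRing.Theory Num.Theory.
Local Open Scope ring_scope.
Local Open Scope classical_set_scope.

Section Defs.
Variable R : realType.

Definition frob_inner (m n : nat) (A B : 'M[R]_(m, n)) : R := \tr (A^T *m B).

Definition frob_norm (m n : nat) (A : 'M[R]_(m, n)) : R :=
  Num.sqrt (\sum_i \sum_j (A i j) ^+ 2).

Definition row_norm (m n : nat) (A : 'M[R]_(m, n)) (i : 'I_m) : R :=
  Num.sqrt (\sum_j (A i j) ^+ 2).

Definition vnorm (n : nat) (x : 'cV[R]_n) : R := Num.sqrt (\sum_i (x i 0) ^+ 2).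

Definition spec_norm (n : nat) (C : 'M[R]_n) : R :=
  sup [set t | exists x : 'cV[R]_n, vnorm x = 1 /\ t = vnorm (C *m x)].

Definition inf_norm (n : nat) (C : 'M[R]_n) : R :=
  \big[Num.max/0]_i \sum_j `|C i j|.

Definition onM (n r : nat) (s : 'M[R]_(n, r)) : Prop := forall i, row_norm s i = 1.

Definition row_normalize (n r : nat) (g : 'M[R]_(n, r)) : 'M[R]_(n, r) :=
  \matrix_(i, j) (g i j / row_norm g i).

Definition admm_gamma (n r : nat) (C : 'M[R]_n) (rho : R)
  (s y : 'M[R]_(n, r)) : 'M[R]_(n, r) :=
  s - rho^-1 *: (y + C *m s).

Definition admm_step (n r : nat) (C : 'M[R]_n) (rho : R)
  (st : 'M[R]_(n, r) * 'M[R]_(n, r) * 'M[R]_(n, r)) :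
  'M[R]_(n, r) * 'M[R]_(n, r) * 'M[R]_(n, r) :=
  let: (_, s, y) := st in
  let t' := row_normalize (admm_gamma C rho s y) in
  let s' := t' + rho^-1 *: (y - C *m t') in
  let y' := y + rho *: (t' - s') in
  (t', s', y').

Definition admm_iter (n r : nat) (C : 'M[R]_n) (rho : R) (t0 : 'M[R]_(n, r))
  (k : nat) : 'M[R]_(n, r) * 'M[R]_(n, r) * 'M[R]_(n, r) :=
  iter k (admm_step C rho) (t0, t0, C *m t0).

Definition tsig n r C rho t0 k : 'M[R]_(n, r) := (@admm_iter n r C rho t0 k).1.1.
Definition sig n r C rho t0 k : 'M[R]_(n, r) := (@admm_iter n r C rho t0 k).1.2.
Definition ymul n r C rho t0 k : 'M[R]_(n, r) := (@admm_iter n r C rho t0 k).2.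

Definition assumptionA n r C rho (t0 : 'M[R]_(n, r)) : Prop :=
  forall k i, row (i : 'I_n) (admm_gamma C rho (sig C rho t0 k) (ymul C rho t0 k)) != 0.

(* augmented Lagrangian, extended-real valued because of the indicator terms *)
Definition L_rho (n r : nat) (C : 'M[R]_n) (rho : R) (t s y : 'M[R]_(n, r)) : \bar R :=
  ((frob_inner C (t *m s^T) + frob_inner y (t - s)
    + rho / 2 * (frob_norm (t - s)) ^+ 2)%:E
   + \sum_(i < n) (if row_norm t i == 1%R then 0 else +oo))%E.

End Defs.

(* Main.v *)
Require Import Defs.
From HB Require Import structures.
From mathcomp Require Import all_boot all_order all_algebra.
From mathcomp Require Import boolp classical_sets reals constructive_ereal.
From mathcomp Require Import ring lra.
Set Implicit Arguments. Unset Strict Implicit. Unset Printing Implicit Defensive.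
Import Order.TTheory GRing.Theory Num.Theory.
Local Open Scope ring_scope.

Section Aux.
Variable R : realType.
Implicit Types (m p : nat).

Lemma fi_sum m p (A B : 'M[R]_(m, p)) :
  frob_inner A B = \sum_i \sum_j A i j * B i j.
Proof.
rewrite /frob_inner /mxtrace exchange_big /=; apply: eq_bigr => j _.
rewrite !mxE; apply: eq_bigr => i _; by rewrite mxE.
Qed.

Lemma fiC m p (A B : 'M[R]_(m, p)) : frob_inner A B = frob_inner B A.
Proof. rewrite !fi_sum; apply: eq_bigr => i _; apply: eq_bigr => j _; exact: mulrC. Qed.

Lemma fiDl m p (A B D : 'M[R]_(m, p)) : frob_inner (A + B) D = frob_inner A D + frob_inner B D.
Proof. rewrite !fi_sum -big_split; apply: eq_bigr => i _; rewrite -big_split; apply: eq_bigr => j _; by rewrite mxE mulrDl. Qed.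

Lemma fiZl m p a (A D : 'M[R]_(m, p)) : frob_inner (a *: A) D = a * frob_inner A D.
Proof. rewrite !fi_sum mulr_sumr; apply: eq_bigr => i _; rewrite mulr_sumr; apply: eq_bigr => j _; by rewrite mxE mulrA. Qed.

Lemma fiNl m p (A D : 'M[R]_(m, p)) : frob_inner (- A) D = - frob_inner A D.
Proof. by rewrite -scaleN1r fiZl mulN1r. Qed.

Lemma fiBl m p (A B D : 'M[R]_(m, p)) : frob_inner (A - B) D = frob_inner A D - frob_inner B D.
Proof. by rewrite fiDl fiNl. Qed.

Lemma fiDr m p (A B D : 'M[R]_(m, p)) : frob_inner D (A + B) = frob_inner D A + frob_inner D B.
Proof. by rewrite fiC fiDl !(fiC D). Qed.
Lemma fiZr m p a (A D : 'M[R]_(m, p)) : frob_inner D (a *: A) = a * frob_inner D A.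
Proof. by rewrite fiC fiZl fiC. Qed.
Lemma fiNr m p (A D : 'M[R]_(m, p)) : frob_inner D (- A) = - frob_inner D A.
Proof. by rewrite fiC fiNl fiC. Qed.
Lemma fiBr m p (A B D : 'M[R]_(m, p)) : frob_inner D (A - B) = frob_inner D A - frob_inner D B.
Proof. by rewrite fiDr fiNr. Qed.

Lemma fiCmul m p (C : 'M[R]_m) (A B : 'M[R]_(m, p)) : C^T = C ->
  frob_inner (C *m A) B = frob_inner A (C *m B).
Proof. by move=> sC; rewrite /frob_inner trmx_mul sC mulmxA. Qed.

Lemma fn2 m p (A : 'M[R]_(m, p)) : frob_norm A ^+ 2 = frob_inner A A.
Proof.
rewrite /frob_norm sqr_sqrtr ?fi_sum; last by do 2 (apply: sumr_ge0 => ? _); exact: sqr_ge0.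
by apply: eq_bigr => i _; apply: eq_bigr => j _; rewrite expr2.
Qed.

Lemma fi_trace m p (C : 'M[R]_m) (t s : 'M[R]_(m, p)) : C^T = C ->
  frob_inner C (t *m s^T) = frob_inner s (C *m t).
Proof.
move=> sC; rewrite /frob_inner sC mulmxA mxtrace_mulC; congr (\tr _).
Qed.
Lemma CS (I : finType) (a b : I -> R) :
  (\sum_i a i * b i) ^+ 2 <= (\sum_i a i ^+ 2) * (\sum_i b i ^+ 2).
Proof.
set A := \sum_i a i ^+ 2; set B := \sum_i b i ^+ 2; set P := \sum_i a i * b i.
have B0 : 0 <= B by apply: sumr_ge0 => i _; exact: sqr_ge0.
have A0 : 0 <= A by apply: sumr_ge0 => i _; exact: sqr_ge0.
have [Bz|Bnz] := eqVneq B 0.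
  have hb : forall i, b i = 0.
    move=> i; apply/eqP; rewrite -sqrf_eq0; apply/eqP.
    have := @psumr_eq0P _ _ predT (fun i => b i ^+ 2) (fun i _ => sqr_ge0 (b i)) Bz i isT. by [].

  have -> : P = 0 by rewrite /P big1 // => i _; rewrite hb mulr0.
  by rewrite Bz expr0n /= mulr0.
have Bp : 0 < B by rewrite lt_def Bnz B0.
have E : \sum_i (a i * B - P * b i) ^+ 2 = B * (A * B - P ^+ 2).
  rewrite (eq_bigr (fun i => a i ^+ 2 * B ^+ 2 - (2 * B * P) * (a i * b i) + P ^+ 2 * b i ^+ 2)); last first.
    by move=> i _; ring.
  rewrite big_split /= sumrB -!mulr_suml -!mulr_sumr -/A -/B -/P; ring.
have : 0 <= B * (A * B - P ^+ 2) by rewrite -E; apply: sumr_ge0 => i _; exact: sqr_ge0.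
rewrite pmulr_rge0 // subr_ge0; by rewrite mulrC.
Qed.

Lemma CSabs (I : finType) (a b : I -> R) :
  `|\sum_i a i * b i| <= Num.sqrt (\sum_i a i ^+ 2) * Num.sqrt (\sum_i b i ^+ 2).
Proof.
have A0 : 0 <= \sum_i a i ^+ 2 by apply: sumr_ge0 => i _; exact: sqr_ge0.
rewrite -sqrtrM // -sqrtr_sqr ler_sqrt; first exact: CS.
by apply: mulr_ge0 => //; apply: sumr_ge0 => i _; exact: sqr_ge0.
Qed.
End Aux.

Section Iter.
Variables (R : realType) (n r : nat) (C : 'M[R]_n) (rho : R) (t0 : 'M[R]_(n, r)).
Hypothesis rho0 : rho != 0.

Lemma tsigS k : tsig C rho t0 k.+1 =
  row_normalize (admm_gamma C rho (sig C rho t0 k) (ymul C rho t0 k)).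
Proof. by rewrite /tsig /sig /ymul /admm_iter iterS; case: (iter k _ _) => [[a b] c]. Qed.

Lemma ymulE k : ymul C rho t0 k = C *m tsig C rho t0 k.
Proof.
case: k => [//|k].
rewrite /tsig /ymul /admm_iter iterS; case: (iter k _ _) => [[a b] c] /=.
set t' := row_normalize _.
rewrite opprD addrA subrr add0r scalerN scalerA mulfV // scale1r opprB addrC subrK //.
Qed.

Lemma sigS k : sig C rho t0 k.+1 =
  tsig C rho t0 k.+1 + rho^-1 *: (C *m tsig C rho t0 k - C *m tsig C rho t0 k.+1).
Proof.
rewrite -ymulE.
by rewrite /tsig /sig /ymul /admm_iter iterS; case: (iter k _ _) => [[a b] c].
Qed.
End Iter.

Section Rdot.
Variables (R : realType) (n r : nat).
Implicit Types (A B X T : 'M[R]_(n, r)).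
Definition rdot A B (i l : 'I_n) := \sum_j A i j * B l j.

Lemma rdotC A B i l : rdot A B i l = rdot B A l i.
Proof. by apply: eq_bigr => j _; rewrite mulrC. Qed.
Lemma rdotDl A B X i l : rdot (A + B) X i l = rdot A X i l + rdot B X i l.
Proof. by rewrite /rdot -big_split; apply: eq_bigr => j _; rewrite mxE mulrDl. Qed.
Lemma rdotZl a A X i l : rdot (a *: A) X i l = a * rdot A X i l.
Proof. by rewrite /rdot mulr_sumr; apply: eq_bigr => j _; rewrite mxE mulrA. Qed.
Lemma rdotNl A X i l : rdot (- A) X i l = - rdot A X i l.
Proof. by rewrite -scaleN1r rdotZl mulN1r. Qed.
Lemma rdotBl A B X i l : rdot (A - B) X i l = rdot A X i l - rdot B X i l.
Proof. by rewrite rdotDl rdotNl. Qed.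
Lemma rdot_mul (C : 'M[R]_n) X T l i : rdot (C *m X) T l i = \sum_m C l m * rdot X T m i.
Proof.
rewrite /rdot (eq_bigr (fun j => \sum_m C l m * (X m j * T i j))); last first.
  by move=> j _; rewrite mxE mulr_suml; apply: eq_bigr => m _; rewrite mulrA.
rewrite exchange_big; apply: eq_bigr => m _; by rewrite mulr_sumr.
Qed.
Lemma rdot_abs A B i l : `|rdot A B i l| <= row_norm A i * row_norm B l.
Proof. exact: CSabs. Qed.
Lemma rdot_self A i : rdot A A i i = row_norm A i ^+ 2.
Proof.
rewrite /row_norm sqr_sqrtr; last by apply: sumr_ge0 => j _; exact: sqr_ge0.
by apply: eq_bigr => j _; rewrite expr2.
Qed.
Lemma rdot_ge0 A i : 0 <= rdot A A i i.
Proof. by rewrite rdot_self sqr_ge0. Qed.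
Lemma fi_rdot A B : frob_inner A B = \sum_i rdot A B i i.
Proof. by rewrite fi_sum. Qed.

Lemma row_norm_ge0 A i : 0 <= row_norm A i.
Proof. exact: sqrtr_ge0. Qed.

Lemma rn_pos (g : 'M[R]_(n, r)) i : row i g != 0 -> 0 < row_norm g i.
Proof.
move=> H.
have [j Hj] : exists j, g i j != 0.
  apply/existsP; apply: contraNT H => /existsPn H; apply/eqP/rowP => j.
  by rewrite !mxE; apply/eqP; move: (H j); rewrite negbK.
rewrite /row_norm sqrtr_gt0 (bigD1 j) //=; apply: ltr_wpDr.
  by apply: sumr_ge0 => k _; exact: sqr_ge0.
by rewrite lt_def sqr_ge0 andbT sqrf_eq0.
Qed.

Lemma normalizeE (g : 'M[R]_(n, r)) i j : row i g != 0 ->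
  g i j = row_norm g i * row_normalize g i j.
Proof. by move=> /rn_pos H; rewrite mxE mulrC divfK // gt_eqF. Qed.

Lemma normalize_unit (g : 'M[R]_(n, r)) i : row i g != 0 ->
  row_norm (row_normalize g) i = 1.
Proof.
move=> H; have P := rn_pos H.
have E : rdot g g i i = row_norm g i ^+ 2 * rdot (row_normalize g) (row_normalize g) i i.
  rewrite /rdot mulr_sumr; apply: eq_bigr => j _; rewrite !(normalizeE j H); ring.
rewrite !rdot_self in E.
have X2 : row_norm (row_normalize g) i ^+ 2 = 1.
  apply: (mulfI (x:=row_norm g i ^+2)); first by rewrite sqrf_eq0 gt_eqF.
  by rewrite mulr1; exact/esym.
have := row_norm_ge0 (row_normalize g) i; nra.
Qed.
End Rdot.

Section Spec.
Variables (R : realType) (n r : nat) (C : 'M[R]_n).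
Local Open Scope classical_set_scope.

Lemma vnorm_sq (x : 'cV[R]_n) : vnorm x ^+ 2 = \sum_i (x i 0) ^+ 2.
Proof. by rewrite /vnorm sqr_sqrtr //; apply: sumr_ge0 => i _; exact: sqr_ge0. Qed.

Lemma vnorm_ge0 (x : 'cV[R]_n) : 0 <= vnorm x.
Proof. exact: sqrtr_ge0. Qed.

Lemma vnormZ a (x : 'cV[R]_n) : vnorm (a *: x) = `|a| * vnorm x.
Proof.
rewrite /vnorm -sqrtr_sqr -sqrtrM ?sqr_ge0 // mulr_sumr; congr Num.sqrt.
by apply: eq_bigr => i _; rewrite mxE exprMn.
Qed.

Lemma Cx_bound (x : 'cV[R]_n) : vnorm x = 1 ->
  vnorm (C *m x) <= Num.sqrt (\sum_i \sum_l C i l ^+ 2).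
Proof.
move=> H1; have H : \sum_l (x l 0) ^+ 2 = 1 by rewrite -vnorm_sq H1 expr1n.
rewrite /vnorm ler_sqrt; last by do 2 (apply: sumr_ge0 => ? _); exact: sqr_ge0.
apply: ler_sum => i _; rewrite mxE.
have := CS (fun l => C i l) (fun l => x l 0); rewrite H mulr1.
by rewrite (eq_bigr (fun l => C i l * x l 0)) // => l _; rewrite mxE.
Qed.

Definition Sset := [set t | exists x : 'cV[R]_n, vnorm x = 1 /\ t = vnorm (C *m x)].

Lemma Sset_ub : has_ubound Sset.
Proof.
exists (Num.sqrt (\sum_i \sum_l C i l ^+ 2)) => t [x [H ->]]; exact: Cx_bound.
Qed.

Lemma spec_ge0 : 0 <= spec_norm C.
Proof.
have [[x Hx]|nx] := pselect (exists x : 'cV[R]_n, vnorm x = 1).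
  apply: le_trans (vnorm_ge0 (C *m x)) _.
  by apply: (ub_le_sup Sset_ub); exists x.
have E : Sset = set0.
  by apply/seteqP; split => // t [x [H _]]; apply: nx; exists x.
by rewrite /spec_norm -/Sset E sup0.
Qed.

Lemma spec_vec (x : 'cV[R]_n) : vnorm (C *m x) <= spec_norm C * vnorm x.
Proof.
have [z|nz] := eqVneq (vnorm x) 0.
  have x0 : x = 0.
    apply/matrixP => i j; rewrite (ord1 j) mxE.
    move: z; rewrite /vnorm => /eqP; rewrite sqrtr_eq0 => z.
    have z' : \sum_i (x i 0) ^+ 2 = 0 by apply/eqP; rewrite eq_le z sumr_ge0 // => k _; exact: sqr_ge0.
    have := @psumr_eq0P _ _ predT (fun i => x i 0 ^+ 2) (fun i _ => sqr_ge0 _) z' i isT.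
    by move/eqP; rewrite sqrf_eq0 => /eqP.
  by rewrite z mulr0 x0 mulmx0 /vnorm big1 ?sqrtr0 // => i _; rewrite mxE expr0n.
have p : 0 < vnorm x by rewrite lt_def nz vnorm_ge0.
have u : vnorm ((vnorm x)^-1 *: x) = 1 by rewrite vnormZ ger0_norm ?invr_ge0 ?vnorm_ge0 // mulVf.
have := ub_le_sup Sset_ub (ex_intro _ _ (conj u erefl)).
rewrite -scalemxAr vnormZ ger0_norm ?invr_ge0 ?vnorm_ge0 //.
by rewrite mulrC ler_pdivrMr.
Qed.

Lemma fi_col (A : 'M[R]_(n, r)) : frob_inner A A = \sum_j vnorm (col j A) ^+ 2.
Proof.
rewrite fi_sum exchange_big; apply: eq_bigr => j _; rewrite vnorm_sq.
by apply: eq_bigr => i _; rewrite !mxE expr2.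
Qed.

Lemma spec_mat (X : 'M[R]_(n, r)) :
  frob_inner (C *m X) (C *m X) <= spec_norm C ^+ 2 * frob_inner X X.
Proof.
rewrite !fi_col mulr_sumr; apply: ler_sum => j _.
rewrite colE -mulmxA -colE -exprMn lerXn2r ?nnegrE ?vnorm_ge0 ?mulr_ge0 ?spec_ge0 //.
  exact: vnorm_ge0.
exact: spec_vec.
Qed.
End Spec.

Section Inf.
Variables (R : realType) (n r : nat) (C : 'M[R]_n).

Lemma infn_ge0 : 0 <= inf_norm C.
Proof. exact: bigmax_ge_id. Qed.

Lemma row_le_inf l : \sum_m `|C l m| <= inf_norm C.
Proof. exact: (le_bigmax 0 (fun i => \sum_j `|C i j|) l). Qed.

Lemma Cbound (X T : 'M[R]_(n, r)) i b :
  (forall m, `|rdot X T m i| <= b) -> forall l, `|rdot (C *m X) T l i| <= inf_norm C * b.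
Proof.
move=> H l; have b0 : 0 <= b by apply: le_trans (H l).
rewrite rdot_mul; apply: le_trans (ler_norm_sum _ _ _) _.
apply: le_trans (_ : \sum_m `|C l m| * b <= _).
  by apply: ler_sum => m _; rewrite normrM ler_wpM2l.
by rewrite -mulr_suml ler_wpM2r // row_le_inf.
Qed.
End Inf.

Lemma mulmxZ (R : realType) m p q (A : 'M[R]_(m, p)) a (B : 'M[R]_(p, q)) :
  A *m (a *: B) = a *: (A *m B).
Proof. by rewrite scalemxAr. Qed.


Lemma row_facts (R : realType) (n r : nat) (t g : 'M[R]_(n, r)) i :
  row_norm t i = 1 -> row i g != 0 ->
  rdot (row_normalize g - t) t i i = - rdot (row_normalize g - t) (row_normalize g - t) i i / 2 /\
  rdot (row_normalize g - t) g i i = row_norm g i / 2 * rdot (row_normalize g - t) (row_normalize g - t) i i.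
Proof.
move=> ht H; have u := normalize_unit H.
set tn := row_normalize g.
have T1 : rdot tn tn i i = 1 by rewrite rdot_self u expr1n.
have T2 : rdot t t i i = 1 by rewrite rdot_self ht expr1n.
have G : rdot (tn - t) g i i = row_norm g i * rdot (tn - t) tn i i.
  rewrite /rdot mulr_sumr; apply: eq_bigr => j _; rewrite (normalizeE j H); ring.
have P1 : rdot (tn - t) tn i i = 1 - rdot tn t i i by rewrite rdotBl T1 rdotC.
have P2 : rdot (tn - t) (tn - t) i i = 2 - 2 * rdot tn t i i.
  by rewrite rdotBl (rdotC tn) (rdotC t) P1 rdotBl T2; ring.
rewrite G P1 P2 rdotBl T2; by split; field.
Qed.

Section Main.
Variables (R : realType) (n r : nat) (C : 'M[R]_n) (rho alpha beta : R).
Hypotheses (sC : C^T = C) (rho0 : 0 < rho) (al0 : 0 < alpha) (be0 : 0 < beta)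
  (hN : alpha * inf_norm C <= rho) (hS : beta * spec_norm C <= rho).

Definition cc := 1 - 4 / alpha - 2 / alpha ^+ 2.

Lemma unit_dot (X t : 'M[R]_(n, r)) i m : (forall i, row_norm X i = 1) ->
  (forall i, row_norm t i = 1) -> `|rdot X t m i| <= 1.
Proof. by move=> hX ht; apply: le_trans (rdot_abs _ _ _ _) _; rewrite hX ht mulr1. Qed.

Lemma gamma_dot_lb (tp t : 'M[R]_(n, r)) i :
  (forall i, row_norm tp i = 1) -> (forall i, row_norm t i = 1) ->
  cc <= rdot (admm_gamma C rho (t + rho^-1 *: (C *m tp - C *m t)) (C *m t)) t i i.
Proof.
move=> htp ht.
have a1 := Cbound C (fun m => unit_dot i m htp ht).
have a2 := Cbound C (fun m => unit_dot i m ht ht).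
have b1 := Cbound C a1. have b2 := Cbound C a2.
rewrite /admm_gamma !(mulmxDr, mulmxN, mulmxZ, rdotDl, rdotNl, rdotZl).
rewrite rdot_self ht expr1n.
move: (a1 i) (a2 i) (b1 i) (b2 i); rewrite mulr1.
set N := inf_norm C; set e := rho^-1.
set A1 := rdot (C *m tp) t i i; set A2 := rdot (C *m t) t i i.
set B1 := rdot _ t i i; set B2 := rdot _ t i i.
move=> /ler_normlP [hA1 hA1'] /ler_normlP [hA2 hA2'] /ler_normlP [hB1 hB1'] /ler_normlP [hB2 hB2'].
have e0 : 0 < e by rewrite invr_gt0.
have N0 : 0 <= N := infn_ge0 C.
have ee : 0 < e * e by rewrite mulr_gt0.
have x1 : e * N <= alpha^-1.
  rewrite -subr_ge0.
  have -> : alpha^-1 - e * N = e * alpha^-1 * (rho - alpha * N).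
    by rewrite /e; field; rewrite !gt_eqF.
  by rewrite mulr_ge0 ?subr_ge0 // mulr_ge0 // ltW // invr_gt0.
have x0 : 0 <= e * N by rewrite mulr_ge0 // ltW.
have ai0 : 0 < alpha^-1 by rewrite invr_gt0.
have -> : cc = 1 - 4 * alpha^-1 - 2 * alpha^-1 ^+ 2 by rewrite /cc exprVn.
have h1 : e * (N + A1) >= 0 by apply: mulr_ge0; [exact: ltW | lra].
have h2 : e * (N - A2) >= 0 by apply: mulr_ge0; [exact: ltW | lra].
have h3 : e * e * (N * N - B1) >= 0 by apply: mulr_ge0; [exact: ltW | lra].
have h4 : e * e * (N * N + B2) >= 0 by apply: mulr_ge0; [exact: ltW | lra].
have h5 : (alpha^-1 - e * N) * (alpha^-1 + e * N) >= 0 by apply: mulr_ge0; lra.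
nra.
Qed.

Lemma sym1 (X Y : 'M[R]_(n, r)) : frob_inner X (C *m Y) = frob_inner Y (C *m X).
Proof. by rewrite -(fiCmul _ _ sC) fiC. Qed.
Lemma sym2 (X Y : 'M[R]_(n, r)) : frob_inner X (C *m (C *m Y)) = frob_inner Y (C *m (C *m X)).
Proof. by rewrite -(fiCmul X _ sC) -(fiCmul Y _ sC) fiC. Qed.

Definition Lr (t s y : 'M[R]_(n, r)) : R :=
  frob_inner C (t *m s^T) + frob_inner y (t - s) + rho / 2 * (frob_norm (t - s)) ^+ 2.

Definition kap := (alpha ^+ 2 - 4 * alpha - 2) * beta / (2 * alpha ^+ 2) - beta^-1.

Lemma main_step (tp t s tn sn : 'M[R]_(n, r)) :
  (forall i, row_norm tp i = 1) -> (forall i, row_norm t i = 1) ->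
  s = t + rho^-1 *: (C *m tp - C *m t) ->
  (forall i, row i (admm_gamma C rho s (C *m t)) != 0) ->
  tn = row_normalize (admm_gamma C rho s (C *m t)) ->
  sn = tn + rho^-1 *: (C *m t - C *m tn) ->
  0 < kap ->
  Lr tn sn (C *m tn) + kap * spec_norm C * frob_norm (tn - t) ^+ 2
    + rho / 2 * frob_norm (sn - s) ^+ 2 <= Lr t s (C *m t).
Proof.
move=> htp ht hs hA htn hsn k0.
have RF i := row_facts (ht i) (hA i).
rewrite -htn in RF.
have F1 : cc / 2 * frob_inner (tn - t) (tn - t) <= frob_inner (tn - t) (admm_gamma C rho s (C *m t)).
  rewrite !fi_rdot mulr_sumr; apply: ler_sum => i _.
  have [_ e2] := RF i.
  rewrite e2 ler_wpM2r ?rdot_ge0 // ler_pM2r ?invr_gt0 ?ltr0n //.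
  have := gamma_dot_lb i htp ht; rewrite -hs => G; apply: le_trans G _.
  apply: le_trans (ler_norm _) _; apply: le_trans (rdot_abs _ _ _ _) _.
  by rewrite ht mulr1.
have F3 : frob_inner (tn - t) t = - frob_inner (tn - t) (tn - t) / 2.
  rewrite !fi_rdot (eq_bigr _ (fun i _ => (RF i).1)).
  by rewrite -sumrN mulr_suml.
have F2 := spec_mat C (tn - t).
have Iden : Lr t s (C *m t) - Lr tn sn (C *m tn) - rho / 2 * frob_norm (sn - s) ^+ 2 =
  rho * frob_inner (tn - t) (admm_gamma C rho s (C *m t)) - rho^-1 * frob_inner (C *m (tn - t)) (C *m (tn - t))
  - rho * (frob_inner (tn - t) t + frob_inner (tn - t) (tn - t) / 2).
  rewrite /Lr !(fi_trace _ _ sC) !fn2 hsn hs /admm_gamma.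
  rewrite ?(mulmxDr, mulmxN, mulmxZ, fiDl, fiDr, fiNl, fiNr, fiZl, fiZr, (fiCmul _ _ sC)).
  rewrite ?(fiC t tp) ?(fiC tn tp) ?(fiC tn t) ?(sym1 t tp) ?(sym1 tn tp) ?(sym1 tn t).
  rewrite ?(sym2 t tp) ?(sym2 tn tp) ?(sym2 tn t).
  field; by rewrite gt_eqF.
set S := spec_norm C.
have S0 : 0 <= S := spec_ge0 C.
have kE : kap = beta * cc / 2 - beta^-1.
  by rewrite /kap /cc; field; rewrite ?gt_eqF.
have cc0 : 0 < cc.
  have : 0 < beta * cc / 2 by move: k0; rewrite kE; have := invr_gt0 beta; rewrite be0; lra.
  by rewrite pmulr_lgt0 ?invr_gt0 ?ltr0n // pmulr_rgt0.
have Q : 0 <= rho * cc / 2 - rho^-1 * S ^+ 2 - kap * S.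
  have -> : rho * cc / 2 - rho^-1 * S ^+ 2 - kap * S = (rho - beta * S) * (cc / 2 + S / (beta * rho)).
    by rewrite kE; field; rewrite ?gt_eqF.
  apply: mulr_ge0; first by rewrite subr_ge0.
  apply: addr_ge0; first by rewrite ltW // divr_gt0.
  by rewrite divr_ge0 // ltW // mulr_gt0.
move: Iden F1 F2 F3 Q; rewrite !fn2.
set X1 := frob_inner (tn - t) (admm_gamma C rho s (C *m t)).
set X2 := frob_inner (C *m (tn - t)) (C *m (tn - t)).
set X3 := frob_inner (tn - t) (tn - t).
move=> Iden F1 F2 F3 Q.
have X30 : 0 <= X3 by rewrite /X3 fi_rdot sumr_ge0 // => i _; exact: rdot_ge0.
have G1 : rho * (cc / 2 * X3) <= rho * X1 by rewrite ler_wpM2l // ltW.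
have G2 : rho^-1 * X2 <= rho^-1 * (S ^+ 2 * X3) by rewrite ler_wpM2l // ltW // invr_gt0.
have G3 := mulr_ge0 X30 Q.
rewrite F3 in Iden.
nra.
Qed.
End Main.

Lemma L_fin (R : realType) (n r : nat) (C : 'M[R]_n) rho (t s y : 'M[R]_(n, r)) :
  (forall i, row_norm t i = 1) -> L_rho C rho t s y = (Lr C rho t s y)%:E.
Proof.
move=> ht; rewrite /L_rho big1 ?adde0 // => i _; by rewrite ht eqxx.
Qed.

Set Implicit Arguments.
Unset Implicit Arguments.
Theorem lemma3 (R : realType) (n r : nat) (C : 'M[R]_n) (alpha beta rho : R)
  (t0 : 'M[R]_(n, r)) :
  C^T = C ->
  0 < alpha -> 0 < beta ->
  let kappa := (alpha ^+ 2 - 4 * alpha - 2) * beta / (2 * alpha ^+ 2) - beta^-1 in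
  0 < kappa ->
  0 < rho -> Num.max (alpha * inf_norm C) (beta * spec_norm C) <= rho ->
  onM t0 ->
  assumptionA C rho t0 ->
  let L k := L_rho C rho (tsig C rho t0 k) (sig C rho t0 k) (ymul C rho t0 k) in
  forall k : nat, (2 <= k)%N ->
    (L k.+1 <= L k)%E /\
    ((kappa * spec_norm C * (frob_norm (tsig C rho t0 k.+1 - tsig C rho t0 k)) ^+ 2
      + rho / 2 * (frob_norm (sig C rho t0 k.+1 - sig C rho t0 k)) ^+ 2)%:E
     <= L k - L k.+1)%E.
Proof.
move=> sC al0 be0 kappa k0 rho0 hmax ht0 hA L k hk.
move: hmax; rewrite ge_max => /andP[hN hS].
have r0 : rho != 0 by rewrite gt_eqF.
have U : forall k i, row_norm (tsig C rho t0 k) i = 1.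
  case=> [|m] i; first exact: ht0.
  by rewrite tsigS; apply: normalize_unit; apply: hA.
case: k hk => [//|m] _.
have hA' : forall i, row i (admm_gamma C rho (sig C rho t0 m.+1) (C *m tsig C rho t0 m.+1)) != 0.
  by move=> i; rewrite -(ymulE _ _ r0); apply: hA.
have htn : tsig C rho t0 m.+2 = row_normalize (admm_gamma C rho (sig C rho t0 m.+1) (C *m tsig C rho t0 m.+1)).
  by rewrite tsigS (ymulE _ _ r0).
have k0' : 0 < kap alpha beta by [].
have M := main_step sC rho0 al0 be0 hN hS (U m) (U m.+1) (sigS _ _ r0 m) hA' htn (sigS _ _ r0 m.+1) k0'.
rewrite /L !(ymulE _ _ r0) !L_fin //.
rewrite lee_fin -EFinB lee_fin.
have P1 : 0 <= kap alpha beta * spec_norm C * frob_norm (tsig C rho t0 m.+2 - tsig C rho t0 m.+1) ^+ 2.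
  by rewrite mulr_ge0 ?sqr_ge0 // mulr_ge0 ?spec_ge0 // ltW.
have P2 : 0 <= rho / 2 * frob_norm (sig C rho t0 m.+2 - sig C rho t0 m.+1) ^+ 2.
  by rewrite mulr_ge0 ?sqr_ge0 // divr_ge0 // ltW.
rewrite /kappa -/(kap alpha beta).
split; lra.
Qed.
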